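(* Let $n\ge2$, $\alpha\in[0,\pi/2)$, $A,B,C,D\in\Pi_{s,\alpha}^n$, $q\in\mathbb{C}$ with $0<|q|\le1$, and $f\in\mathcal{F}$. If $\mathcal{R}(A)\le\mathcal{R}(C)$ and $\mathcal{R}(B)\le\mathcal{R}(D)$, then \[ |q|\,w_q(A\sigma_fB)\le\sec^3(\alpha)\,w_q(C\sigma_fD). \]
   Context: For $\alpha\in[0,\pi/2)$, $S_\alpha=\{z\in\mathbb{C}:\operatorname{Re}z>0,\ |\operatorname{Im}z|\le\tan(\alpha)\operatorname{Re}z\}$, and $\Pi_{s,\alpha}^n$ is the set of $n\times n$ complex matrices whose numerical range is contained in $S_\alpha$. $\mathcal{R}(X)=\frac{X+X^*}{2}$, and $\le$ is the Loewner order. $\mathcal{F}$ is the set of operator monotone $f:(0,\infty)\to(0,\infty)$ with $f(1)=1$, each with a probability measure $\nu_f$ on $[0,1]$ such that $f(x)=\int_0^1((1-s)+sx^{-1})^{-1}d\nu_f(s)$. For accretive $X,Y$, $X!_sY=((1-s)X^{-1}+sY^{-1})^{-1}$ and $X\sigma_fY=\int_0^1(X!_sY)\,d\nu_f(s)$. $w_q(X)=\sup\{|\langle Xx,y\rangle|:\|x\|=\|y\|=1,\ \langle x,y\rangle=q\}$. *)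

(* Defs.v *)
From HB Require Import structures.
From mathcomp Require Import all_boot all_order all_algebra.
From mathcomp Require Import complex.
From mathcomp Require Import all_classical all_reals all_analysis.

Set Implicit Arguments.
Unset Strict Implicit.
Unset Printing Implicit Defensive.

Import Order.TTheory GRing.Theory Num.Theory.
Local Open Scope ring_scope.

Section Defs.
Variable R : realType.
Local Notation C := R[i].

Definition inner (n : nat) (x y : 'cV[C]_n) : C :=
  \sum_(i < n) x i 0 * conjc (y i 0).

Definition adjm (n : nat) (X : 'M[C]_n) : 'M[C]_n := map_mx (@conjc R) X^T.

Definition realpart (n : nat) (X : 'M[C]_n) : 'M[C]_n :=
  (2%:R)^-1 *: (X + adjm X).

(* positive semidefinite: <Mx,x> >= 0 (in the partial order of C) for all x *)
Definition psd (n : nat) (M : 'M[C]_n) : Prop :=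
  forall x : 'cV[C]_n, 0 <= inner (M *m x) x.

Definition loewner_le (n : nat) (X Y : 'M[C]_n) : Prop := psd (Y - X).

Definition in_sector (alpha : R) (z : C) : Prop :=
  0 < complex.Re z /\ `|complex.Im z| <= tan alpha * complex.Re z.

Definition in_Pi (alpha : R) (n : nat) (X : 'M[C]_n) : Prop :=
  forall x : 'cV[C]_n, inner x x = 1 -> in_sector alpha (inner (X *m x) x).

Definition harm_s (n : nat) (s : R) (X Y : 'M[C]_n) : 'M[C]_n :=
  invmx (((1 - s)%:C)%C *: invmx X + (s%:C)%C *: invmx Y).

Definition mx_integral (nu : probability R R) (n : nat) (F : R -> 'M[C]_n)
  : 'M[C]_n :=
  \matrix_(i < n, j < n)
    Complex (Rintegral nu `[0, 1]%classic (fun s => complex.Re (F s i j)))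
            (Rintegral nu `[0, 1]%classic (fun s => complex.Im (F s i j))).

Definition sigma_mean (nu : probability R R) (n : nat) (X Y : 'M[C]_n)
  : 'M[C]_n :=
  mx_integral nu (fun s => harm_s s X Y).

Definition wq (n : nat) (q : C) (X : 'M[C]_n) : R :=
  sup [set r : R | exists x y : 'cV[C]_n,
         [/\ inner x x = 1, inner y y = 1, inner x y = q &
             r = complex.Re `|inner (X *m x) y|]].

Definition unitary (m : nat) (U : 'M[C]_m) : Prop := adjm U *m U = 1%:M.

(* f(X) for a positive definite X = U diag(a) U^*, computed as U diag(f a) U^* *)
Definition diag_of (m : nat) (a : 'rV[R]_m) : 'M[C]_m :=
  diag_mx (map_mx (fun t : R => (t%:C)%C) a).

(* operator monotone on (0,oo): for all sizes m and all positive definite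
   X <= Y (given through unitary diagonalisations), f(X) <= f(Y) *)
Definition operator_monotone (f : R -> R) : Prop :=
  forall (m : nat) (U V : 'M[C]_m) (a b : 'rV[R]_m),
    unitary U -> unitary V ->
    (forall i, 0 < a 0 i) -> (forall i, 0 < b 0 i) ->
    loewner_le (U *m diag_of a *m adjm U) (V *m diag_of b *m adjm V) ->
    loewner_le (U *m diag_of (map_mx f a) *m adjm U)
               (V *m diag_of (map_mx f b) *m adjm V).

Definition in_classF (f : R -> R) : Prop :=
  [/\ forall x, 0 < x -> 0 < f x, operator_monotone f & f 1 = 1].

Definition represents (nu : probability R R) (f : R -> R) : Prop :=
  nu `[0, 1]%classic = 1%E /\
  forall x : R, 0 < x ->
    f x = Rintegral nu `[0, 1]%classic (fun s => ((1 - s) + s * x^-1)^-1).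

End Defs.

(* Main.v *)
Require Import Defs.
From HB Require Import structures.
From mathcomp Require Import all_boot all_order all_algebra.
From mathcomp Require Import complex.
From mathcomp Require Import all_classical all_reals all_analysis.
From mathcomp.algebra_tactics Require Import ring lra.
Import Order.TTheory GRing.Theory Num.Theory.
Local Open Scope ring_scope.
Set Implicit Arguments.
Unset Strict Implicit.
Unset Printing Implicit Defensive.

Local Notation RE := complex.Re.
Local Notation IM := complex.Im.

Section S.
Variable R : realType.
Local Notation C := R[i].
Implicit Types (x y z : C).

Lemma ReM x y : RE (x * y) = RE x * RE y - IM x * IM y.
Proof. by case: x => a b; case: y => c d. Qed.
Lemma ImM x y : IM (x * y) = RE x * IM y + IM x * RE y.
Proof. by case: x => a b; case: y => c d /=; ring. Qed.
Lemma ReD x y : RE (x + y) = RE x + RE y.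
Proof. by case: x => a b; case: y => c d. Qed.
Lemma ImD x y : IM (x + y) = IM x + IM y.
Proof. by case: x => a b; case: y => c d. Qed.
Lemma ReN x : RE (- x) = - RE x.
Proof. by case: x. Qed.
Lemma ImN x : IM (- x) = - IM x.
Proof. by case: x. Qed.
Lemma ReJ x : RE (x^*)%C = RE x.
Proof. by case: x. Qed.
Lemma ImJ x : IM (x^*)%C = - IM x.
Proof. by case: x. Qed.
Lemma Rec (a : R) : RE (a%:C)%C = a. Proof. by []. Qed.
Lemma Imc (a : R) : IM (a%:C)%C = 0. Proof. by []. Qed.
Lemma cjK x : (x^*)^*%C = x. Proof. by case: x => a b /=; rewrite opprK. Qed.
Lemma cjM x y : (x * y)^*%C = x^*%C * y^*%C.
Proof. by case: x => a b; case: y => c d /=; apply/eqP; rewrite eq_complex /=; apply/andP; split; apply/eqP; ring. Qed.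
Lemma cjD x y : (x + y)^*%C = x^*%C + y^*%C.
Proof. by case: x => a b; case: y => c d /=; apply/eqP; rewrite eq_complex /=; apply/andP; split; apply/eqP; ring. Qed.
Lemma cjN x : (- x)^*%C = - x^*%C.
Proof. by case: x => a b /=. Qed.
Lemma cj_sum (I : Type) (r : seq I) (F : I -> C) :
  (\sum_(i <- r) F i)^*%C = \sum_(i <- r) (F i)^*%C.
Proof. elim: r => [|a r IH]; rewrite ?big_nil ?big_cons ?cjD ?IH //=. by rewrite oppr0. Qed.
Lemma rc_sum (I : Type) (r : seq I) (F : I -> R) :
  (\sum_(i <- r) F i)%:C%C = \sum_(i <- r) (F i)%:C%C.
Proof. elim: r => [|a r IH]; rewrite ?big_nil ?big_cons //= -IH. by apply/eqP; rewrite eq_complex /= addr0 !eqxx. Qed.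
Lemma Re_sum (I : Type) (r : seq I) (F : I -> C) :
  RE (\sum_(i <- r) F i) = \sum_(i <- r) RE (F i).
Proof. by elim: r => [|a r IH]; rewrite ?big_nil ?big_cons ?ReD ?IH. Qed.
Lemma Im_sum (I : Type) (r : seq I) (F : I -> C) :
  IM (\sum_(i <- r) F i) = \sum_(i <- r) IM (F i).
Proof. by elim: r => [|a r IH]; rewrite ?big_nil ?big_cons ?ImD ?IH. Qed.

Section Inner.
Variable n : nat.
Local Notation V := 'cV[C]_n.
Local Notation M := 'M[C]_n.
Implicit Types (u v w : V) (X Y : M).

Lemma innerDl u v w : inner (u + v) w = inner u w + inner v w.
Proof. by rewrite /inner -big_split; apply: eq_bigr => i _; rewrite mxE mulrDl. Qed.
Lemma innerDr u v w : inner u (v + w) = inner u v + inner u w.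
Proof. by rewrite /inner -big_split; apply: eq_bigr => i _; rewrite mxE cjD mulrDr. Qed.
Lemma innerZl c u v : inner (c *: u) v = c * inner u v.
Proof. by rewrite /inner mulr_sumr; apply: eq_bigr => i _; rewrite mxE mulrA. Qed.
Lemma innerZr c u v : inner u (c *: v) = c^*%C * inner u v.
Proof. by rewrite /inner mulr_sumr; apply: eq_bigr => i _; rewrite mxE cjM mulrCA. Qed.
Lemma innerNl u v : inner (- u) v = - inner u v.
Proof. by rewrite -scaleN1r innerZl mulN1r. Qed.
Lemma innerNr u v : inner u (- v) = - inner u v.
Proof. by rewrite -scaleN1r innerZr /= oppr0 mulN1r. Qed.
Lemma innerBl u v w : inner (u - v) w = inner u w - inner v w.
Proof. by rewrite innerDl innerNl. Qed.
Lemma innerBr u v w : inner u (v - w) = inner u v - inner u w.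
Proof. by rewrite innerDr innerNr. Qed.
Lemma inner_conj u v : inner v u = (inner u v)^*%C.
Proof.
rewrite /inner cj_sum; apply: eq_bigr => i _.
by rewrite cjM cjK mulrC.
Qed.
Lemma inner_adj X u v : inner (X *m u) v = inner u (adjm X *m v).
Proof.
rewrite /inner.
under eq_bigr do rewrite mxE big_distrl /=.
rewrite exchange_big /=; apply: eq_bigr => j _.
rewrite mxE cj_sum mulr_sumr; apply: eq_bigr => i _.
by rewrite !mxE cjM cjK mulrCA mulrA.
Qed.
Lemma adjmK X : adjm (adjm X) = X.
Proof. by apply/matrixP => i j; rewrite !mxE cjK. Qed.

Lemma inner_selfE u : inner u u = (\sum_i (RE (u i 0) ^+ 2 + IM (u i 0) ^+ 2))%:C%C.
Proof.
rewrite /inner rc_sum.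
apply: eq_bigr => i _.
by case: (u i 0) => a b /=; apply/eqP; rewrite eq_complex /= !expr2; apply/andP; split; apply/eqP; ring.
Qed.

Lemma Re_inner_self_ge0 u : 0 <= RE (inner u u).
Proof. by rewrite inner_selfE /=; apply: sumr_ge0 => i _; rewrite addr_ge0 ?sqr_ge0. Qed.
Lemma Im_inner_self u : IM (inner u u) = 0.
Proof. by rewrite inner_selfE. Qed.
Lemma inner_self_eq0 u : RE (inner u u) = 0 -> u = 0.
Proof.
rewrite inner_selfE /= => /eqP; rewrite psumr_eq0; last by move=> i _; rewrite addr_ge0 ?sqr_ge0.
move=> /allP H; apply/matrixP => i j; rewrite (ord1 j) mxE.
have /H := mem_index_enum i; rewrite implyTb paddr_eq0 ?sqr_ge0 // !sqrf_eq0.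
by case: (u i 0) => a b /= /andP[/eqP -> /eqP ->].
Qed.

Definition FF X u := inner (X *m u) u.

Lemma FF_expand X u v c :
  FF X (u + c *: v) = FF X u + c^*%C * inner (X *m u) v + c * inner (X *m v) u
     + c * c^*%C * FF X v.
Proof.
rewrite /FF mulmxDr -scalemxAr !innerDl !innerDr !innerZl !innerZr.
by rewrite mulrA; ring.
Qed.

Lemma FF_realpart X u : FF (realpart X) u = (RE (FF X u))%:C%C.
Proof.
rewrite /FF /realpart -scalemxAl mulmxDl innerZl innerDl [inner (adjm X *m u) _]inner_adj adjmK.
rewrite (inner_conj (X *m u) u) ReJ_add mulrC; congr (_ * _).
Qed.

Lemma loewner_Re X Y : loewner_le (realpart X) (realpart Y) ->
  forall u, RE (FF X u) <= RE (FF Y u).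
Proof.
move=> H u; have := H u; rewrite mulmxBl innerBl -!/(FF _ _) !FF_realpart.
by rewrite lecE => /andP[_]; rewrite ReD ReN /= subr_ge0.
Qed.

Definition Wt (t : R) X := forall u, 0 <= RE (FF X u) /\ `|IM (FF X u)| <= t * RE (FF X u).

Lemma lemS t X : 0 <= t -> Wt t X -> forall u v,
  2 * RE (inner (X *m u) v) <= RE (FF X u) + (1 + t ^+ 2) * RE (FF X v).
Proof.
move=> t0 W u v.
have [ua ub] := W u; have [va vb] := W v.
rewrite le_eqVlt in t0; case/orP: t0 => [/eqP t0|tp].
  rewrite -t0 in ua ub va vb *.
  move: ub vb; rewrite !mul0r !normr_le0 => /eqP ub /eqP vb.
  have [h1 _] := W (u + (-1) *: v).
  have [_ h2] := W (u + 'i%C *: v).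
  move: h2; rewrite -t0 mul0r normr_le0 => /eqP h2.
  move: h1 h2; rewrite !FF_expand !ReD !ImD !ReM !ImM /= ub vb.
  move=> h1 h2. rewrite expr0n /= addr0 mul1r. lra.
have [_ h1] := W (u + (-1 +i* t)%C *: v).
have [_ h2] := W (u + (-1 +i* (-t))%C *: v).
move: h1 h2; rewrite !FF_expand !ReD !ImD !ReM !ImM /= !ler_norml => /andP[h1 _] /andP[_ h2].
have key : 0 <= t * (RE (FF X u) + (1 + t ^+ 2) * RE (FF X v) - 2 * RE (inner (X *m u) v)).
  rewrite expr2. lra.
by move: key; rewrite pmulr_rge0 // subr_ge0.
Qed.


Lemma ReRM (r : R) x : RE (r%:C%C * x) = r * RE x.
Proof. by case: x => a b /=; ring. Qed.
Lemma ImRM (r : R) x : IM (r%:C%C * x) = r * IM x.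
Proof. by case: x => a b /=; ring. Qed.

Lemma FF_comb (a b : R) X Y w :
  FF (a%:C%C *: X + b%:C%C *: Y) w = a%:C%C * FF X w + b%:C%C * FF Y w.
Proof. by rewrite /FF mulmxDl -!scalemxAl innerDl !innerZl. Qed.

Lemma FF0 X : FF X 0 = 0.
Proof. by rewrite /FF mulmx0 /inner big1 // => i _; rewrite mxE mul0r. Qed.

Lemma inj_unit X : (forall w : V, X *m w = 0 -> w = 0) -> X \in unitmx.
Proof.
move=> H; rewrite -unitmx_tr -row_free_unit -kermx_eq0; apply/eqP.
apply/row_matrixP => i; rewrite row0.
have K : row i (kermx X^T) *m X^T = 0 by rewrite -row_mul mulmx_ker row0.
have : X *m (row i (kermx X^T))^T = 0 by rewrite -[X in X *m _]trmxK -trmx_mul K trmx0.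
by move/H => /(congr1 trmx); rewrite trmxK trmx0.
Qed.

Definition Pos X := forall w : V, w != 0 -> 0 < RE (FF X w).

Lemma Pos_unit X : Pos X -> X \in unitmx.
Proof.
move=> P; apply: inj_unit => w Xw; apply/eqP; apply/negPn/negP => /P.
by rewrite /FF Xw /inner big1 ?ltxx // => i _; rewrite mxE mul0r.
Qed.

Lemma FF_inv X w : X \in unitmx ->
  FF (invmx X) w = (FF X (invmx X *m w))^*%C.
Proof.
move=> U; rewrite /FF mulKVmx // inner_conj; done.
Qed.

Lemma Pos_inv X : Pos X -> Pos (invmx X).
Proof.
move=> P w w0; have U := Pos_unit P.
rewrite FF_inv // ReJ; apply: P; apply/eqP => h; move/eqP: w0; apply.
by rewrite -(mulKVmx U w) h mulmx0.
Qed.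

Lemma Wt_inv t X : X \in unitmx -> Wt t X -> Wt t (invmx X).
Proof. by move=> U W w; rewrite FF_inv // ReJ ImJ normrN; apply: W. Qed.

Lemma Pos_comb (s : R) X Y : 0 <= s <= 1 -> Pos X -> Pos Y ->
  Pos ((1 - s)%:C%C *: X + s%:C%C *: Y).
Proof.
move=> /andP[s0 s1] PX PY w w0; rewrite FF_comb ReD !ReRM.
have := PX w w0; have := PY w w0.
rewrite le_eqVlt in s0; case/orP: s0 => [/eqP <-|sp] a b.
  by rewrite subr0 mul1r mul0r addr0.
rewrite le_eqVlt in s1; case/orP: s1 => [/eqP ->|s1] .
  by rewrite subrr mul0r add0r mul1r.
by rewrite addr_gt0 // mulr_gt0 // subr_gt0.
Qed.

Lemma Wt_comb t (s : R) X Y : 0 <= s <= 1 -> Wt t X -> Wt t Y ->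
  Wt t ((1 - s)%:C%C *: X + s%:C%C *: Y).
Proof.
move=> /andP[s0 s1] WX WY w; rewrite FF_comb ReD ImD !ReRM !ImRM.
have [x1 x2] := WX w; have [y1 y2] := WY w.
have s1' : 0 <= 1 - s by rewrite subr_ge0.
split; first by rewrite addr_ge0 // mulr_ge0.
apply: (le_trans (ler_normD _ _)); rewrite !normrM (ger0_norm s1') (ger0_norm s0).
rewrite mulrDr; apply: lerD.
  by rewrite mulrCA ler_wpM2l.
by rewrite mulrCA ler_wpM2l.
Qed.

Lemma lemT t X : 0 <= t -> X \in unitmx -> Wt t X -> forall u v,
  2 * RE (inner u v) - RE (FF (invmx X) v) <= (1 + t ^+ 2) * RE (FF X u).
Proof.
move=> t0 U W u v.
have := lemS t0 W (invmx X *m v) u.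
rewrite FF_inv // ReJ.
have -> : RE (inner u v) = RE (inner (X *m (invmx X *m v)) u).
  by rewrite mulKVmx // (inner_conj u) ReJ.
move=> h; lra.
Qed.

Definition Mx (s : R) X Y := (1 - s)%:C%C *: invmx X + s%:C%C *: invmx Y.

Lemma lemP1 t (s : R) A B (a b : V) : 0 <= t -> 0 <= s <= 1 ->
  A \in unitmx -> B \in unitmx -> Wt t A -> Wt t B -> Mx s A B \in unitmx ->
  RE (FF (invmx (Mx s A B)) ((1 - s)%:C%C *: a + s%:C%C *: b))
    <= (1 + t ^+ 2) * ((1 - s) * RE (FF A a) + s * RE (FF B b)).
Proof.
move=> t0 /andP[s0 s1] UA UB WA WB UM.
set z := (_ *: a + _ *: b).
set w := invmx (Mx s A B) *m z.
have Mw : Mx s A B *m w = z by rewrite /w mulKVmx.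
have E1 : RE (FF (invmx (Mx s A B)) z) = RE (FF (Mx s A B) w).
  by rewrite FF_inv // ReJ.
have E2 : RE (inner z w) = RE (FF (Mx s A B) w) by rewrite /FF Mw.
have E3 : RE (FF (Mx s A B) w) = (1 - s) * RE (FF (invmx A) w) + s * RE (FF (invmx B) w).
  by rewrite /Mx FF_comb ReD !ReRM.
have E4 : RE (inner z w) = (1 - s) * RE (inner a w) + s * RE (inner b w).
  by rewrite /z innerDl !innerZl ReD !ReRM.
have hA := lemT t0 UA WA a w.
have hB := lemT t0 UB WB b w.
have s1' : 0 <= 1 - s by rewrite subr_ge0.
have hA' := ler_wpM2l s1' hA.
have hB' := ler_wpM2l s0 hB.
rewrite E1; lra.
Qed.

Lemma lemP2 t (s : R) A B Cm Dm (z : V) : 0 <= t -> 0 <= s <= 1 ->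
  A \in unitmx -> B \in unitmx -> Cm \in unitmx -> Dm \in unitmx ->
  Wt t A -> Wt t B -> Mx s A B \in unitmx -> Mx s Cm Dm \in unitmx ->
  loewner_le (realpart A) (realpart Cm) -> loewner_le (realpart B) (realpart Dm) ->
  RE (FF (invmx (Mx s A B)) z) <= (1 + t ^+ 2) * RE (FF (invmx (Mx s Cm Dm)) z).
Proof.
move=> t0 s01 UA UB UC UD WA WB UM UN LAC LBD.
have /andP[s0 s1] := s01.
set w := invmx (Mx s Cm Dm) *m z.
set a := invmx Cm *m w; set b := invmx Dm *m w.
have Ez : z = (1 - s)%:C%C *: a + s%:C%C *: b.
  by rewrite /a /b !scalemxAl -mulmxDl -/(Mx s Cm Dm) /w mulKVmx.
have h := lemP1 a b t0 s01 UA UB WA WB UM; rewrite -Ez in h.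
apply: (le_trans h).
have s1' : 0 <= 1 - s by rewrite subr_ge0.
have t2 : 0 <= 1 + t ^+ 2 by rewrite addr_ge0 // sqr_ge0.
have EC : RE (FF Cm a) = RE (FF (invmx Cm) w) by rewrite FF_inv // ReJ.
have ED : RE (FF Dm b) = RE (FF (invmx Dm) w) by rewrite FF_inv // ReJ.
have EN : RE (FF (invmx (Mx s Cm Dm)) z) = (1 - s) * RE (FF (invmx Cm) w) + s * RE (FF (invmx Dm) w).
  rewrite FF_inv // ReJ -/w /Mx FF_comb ReD !ReRM //.
rewrite EN -EC -ED; apply: ler_wpM2l => //.
apply: lerD; apply: ler_wpM2l => //; exact: loewner_Re.
Qed.

End Inner.

Lemma FF_scaleR n (X : 'M[C]_n) (k : R) w : FF X (k%:C%C *: w) = (k ^+ 2)%:C%C * FF X w.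
Proof.
rewrite /FF -scalemxAr innerZl innerZr mulrA; congr (_ * _).
by apply/eqP; rewrite eq_complex /= !expr2 !oppr0 !mulr0 !mul0r !subr0 addr0 !eqxx.
Qed.
Lemma inner_scaleR n (w : 'cV[C]_n) (k : R) : inner (k%:C%C *: w) (k%:C%C *: w) = (k ^+ 2)%:C%C * inner w w.
Proof.
rewrite innerZl innerZr mulrA; congr (_ * _).
by apply/eqP; rewrite eq_complex /= !expr2 !oppr0 !mulr0 !mul0r !subr0 addr0 !eqxx.
Qed.

Lemma Pi_PosWt (alpha : R) n (X : 'M[C]_n) : in_Pi alpha X -> Pos X /\ Wt (tan alpha) X.
Proof.
move=> HP.
suff H : forall w : 'cV[C]_n, w != 0 -> 0 < RE (FF X w) /\ `|IM (FF X w)| <= tan alpha * RE (FF X w).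
  split; first by move=> w /H [].
  move=> w; have [->|w0] := eqVneq w 0; first by rewrite FF0 /= normr0 mulr0 lexx.
  by have [h1 h2] := H w w0; split => //; exact: ltW.
move=> w w0.
set r := RE (inner w w).
have r0 : 0 < r.
  rewrite lt_def Re_inner_self_ge0 andbT; apply/eqP => h; move/eqP: w0; apply.
  exact: inner_self_eq0.
set k := (Num.sqrt r)^-1.
have k2 : k ^+ 2 * r = 1.
  by rewrite /k exprVn sqr_sqrtr ?ltW // mulVf // gt_eqF.
have k2p : 0 < k ^+ 2 by rewrite exprn_gt0 // invr_gt0 sqrtr_gt0.
have iw : inner w w = r%:C%C.
  by apply/eqP; rewrite eq_complex /= Im_inner_self !eqxx.
have := HP (k%:C%C *: w); rewrite -/(FF X _) FF_scaleR inner_scaleR iw.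
rewrite -rmorphM /= k2 => /(_ erefl) [].
rewrite ReRM ImRM normrM (ger0_norm (ltW k2p)) pmulr_rgt0 // => h1.
by rewrite mulrCA ler_pM2l.
Qed.
End S.

Section CM.
Variable R : realType.
Local Notation C := R[i].
Variable D : set R.
Variable mD : measurable D.

Definition cm (h : R -> C) :=
  measurable_fun D (fun s => RE (h s)) /\ measurable_fun D (fun s => IM (h s)).

Lemma cm_cst (c : C) : cm (fun _ => c).
Proof. by split; exact: measurable_cst. Qed.

Lemma cm_real : cm (fun s => s%:C%C).
Proof. by split => /=; [exact: measurable_id | exact: measurable_cst]. Qed.

Lemma cm_add h g : cm h -> cm g -> cm (fun s => h s + g s).
Proof.
move=> [h1 h2] [g1 g2]; split.
  by under eq_fun do rewrite ReD; exact: measurable_realfun.measurable_funD.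
by under eq_fun do rewrite ImD; exact: measurable_realfun.measurable_funD.
Qed.

Lemma cm_mul h g : cm h -> cm g -> cm (fun s => h s * g s).
Proof.
move=> [h1 h2] [g1 g2]; split.
  by under eq_fun do rewrite ReM; apply: measurable_realfun.measurable_funB; exact: measurable_realfun.measurable_funM.
by under eq_fun do rewrite ImM; apply: measurable_realfun.measurable_funD; exact: measurable_realfun.measurable_funM.
Qed.

Lemma cm_sum (I : Type) (r : seq I) (F : I -> R -> C) :
  (forall i, cm (F i)) -> cm (fun s => \sum_(i <- r) F i s).
Proof.
move=> H; elim: r => [|a r IH].
  by under eq_fun do rewrite big_nil; exact: cm_cst.
by under eq_fun do rewrite big_cons; exact: cm_add.
Qed.

Lemma cm_prod (I : Type) (r : seq I) (F : I -> R -> C) :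
  (forall i, cm (F i)) -> cm (fun s => \prod_(i <- r) F i s).
Proof.
move=> H; elim: r => [|a r IH].
  by under eq_fun do rewrite big_nil; exact: cm_cst.
by under eq_fun do rewrite big_cons; exact: cm_mul.
Qed.

Lemma measurable_inv_on (g : R -> R) : measurable_fun D g ->
  (forall s, D s -> g s != 0) -> measurable_fun D (fun s => (g s)^-1).
Proof.
move=> mg g0.
apply: (@measurable_comp _ _ _ _ _ _ [set x : R | x != 0] (@GRing.inv R) D g).
- by apply: measurable_realfun.open_measurable; exact: open_neq.
- by move=> _ [s Ds <-]; exact: g0.
- apply: measurable_realfun.open_continuous_measurable_fun; first exact: open_neq.
  by move=> x; rewrite inE => x0; exact: inv_continuous.
- exact: mg.
Qed.

Lemma ReV (x : C) : RE (x^-1) = RE x / (RE x ^+ 2 + IM x ^+ 2).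
Proof. by case: x. Qed.
Lemma ImV (x : C) : IM (x^-1) = - IM x / (RE x ^+ 2 + IM x ^+ 2).
Proof. by case: x => a b /=; rewrite mulNr. Qed.

Lemma cm_inv h : cm h -> (forall s, D s -> h s != 0) -> cm (fun s => (h s)^-1).
Proof.
move=> [h1 h2] h0.
have mn : measurable_fun D (fun s => (RE (h s) ^+ 2 + IM (h s) ^+ 2)^-1).
  apply: measurable_inv_on.
    by apply: measurable_realfun.measurable_funD; exact: measurable_realfun.measurable_funX.
  move=> s Ds; have := h0 s Ds; apply: contra.
  case: (h s) => a b /=; rewrite paddr_eq0 ?sqr_ge0 // !sqrf_eq0 => /andP[/eqP -> /eqP ->].
  by [].
split.
  by under eq_fun do rewrite ReV; exact: measurable_realfun.measurable_funM.
under eq_fun do rewrite ImV; apply: measurable_realfun.measurable_funM => //.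
exact: measurable_realfun.measurable_funN.
Qed.

Lemma cm_det k (G : R -> 'M[C]_k) : (forall i j, cm (fun s => G s i j)) ->
  cm (fun s => \det (G s)).
Proof.
move=> H; rewrite /determinant.
apply: cm_sum => sg; apply: cm_mul; first exact: cm_cst.
by apply: cm_prod => i; exact: H.
Qed.

End CM.

Section Int.
Variable R : realType.
Local Notation C := R[i].
Variable nu : probability R R.
Local Notation D := (`[0, 1]%classic : set R).
Local Notation Rint f := (Rintegral nu D f).
Local Notation itg f := (nu.-integrable D (EFin \o f)).

Lemma mD : measurable D. Proof. exact: measurable_itv. Qed.

Lemma int_bdd (f : R -> R) (Bd : R) : measurable_fun D f ->
  (forall s, D s -> `|f s| <= Bd) -> itg f.
Proof.
move=> mf fB; apply/integrableP; split; first exact/measurable_realfun.measurable_EFinP.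
apply: (le_lt_trans (integral_le_bound (`|Bd|)%:E _ _ _ _)).
- exact: mD.
- exact/measurable_realfun.measurable_EFinP.
- by rewrite lee_fin.
- apply: aeW => s Ds /=; rewrite lee_fin (le_trans (fB s Ds)) //; exact: ler_norm.
apply: lte_mul_pinfty => //.
by apply: (le_lt_trans (probability_le1 nu mD)); exact: ltry.
Qed.

Lemma itg_add f g : itg f -> itg g -> itg (fun s => f s + g s).
Proof.
move=> hf hg; apply: (eq_integrable mD _ _ _ (integrableD mD hf hg)) => s _ /=.
by rewrite EFinD.
Qed.

Lemma itg_scale (c : R) f : itg f -> itg (fun s => f s * c).
Proof.
move=> hf; apply: (eq_integrable mD _ _ _ (integrableZl mD c hf)) => s _ /=.
by rewrite -EFinM mulrC.
Qed.

Lemma itg_opp f : itg f -> itg (fun s => - f s).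
Proof.
move=> hf; apply: (eq_integrable mD _ _ _ (itg_scale (-1) hf)) => s _ /=.
by rewrite mulrN1.
Qed.

Lemma itg0 : itg (fun _ => 0 : R).
Proof. apply: (eq_integrable mD (cst 0%E)); last exact: integrable0. by move=> s _. Qed.

Lemma Rint_sum (I : Type) (r : seq I) (F : I -> R -> R) :
  (forall i, itg (F i)) ->
  itg (fun s => \sum_(i <- r) F i s) /\
  Rint (fun s => \sum_(i <- r) F i s) = \sum_(i <- r) Rint (F i).
Proof.
move=> H; elim: r => [|a r [IH1 IH2]].
  rewrite (_ : (fun s => \sum_(i <- [::]) F i s) = fun _ => 0); last first.
    by apply: funext => s; rewrite big_nil.
  rewrite big_nil; split; first exact: itg0.
  by rewrite Rintegral_cst ?mul0r //; exact: mD.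
rewrite (_ : (fun s => \sum_(i <- a :: r) F i s) = fun s => F a s + \sum_(i <- r) F i s); last first.
  by apply: funext => s; rewrite big_cons.
split; first exact: itg_add.
rewrite big_cons RintegralD //; first by rewrite IH2.
Qed.

Lemma Rint_lin f g (a b : R) : itg f -> itg g ->
  Rint (fun s => f s * a - g s * b) = Rint f * a - Rint g * b.
Proof.
move=> hf hg; rewrite RintegralB; first last.
- exact: itg_scale.
- exact: itg_scale.
- exact: mD.
by rewrite !RintegralZr //; exact: mD.
Qed.

Lemma Rint_lin2 f g (a b : R) : itg f -> itg g ->
  Rint (fun s => f s * a + g s * b) = Rint f * a + Rint g * b.
Proof.
move=> hf hg; rewrite RintegralD; first last.
- exact: itg_scale.
- exact: itg_scale.
- exact: mD.
by rewrite !RintegralZr //; exact: mD.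
Qed.

Lemma FF_entriesRe n (X : 'M[C]_n) z : RE (FF X z) =
  \sum_i \sum_j (RE (X i j) * RE (z j 0 * (z i 0)^*%C) - IM (X i j) * IM (z j 0 * (z i 0)^*%C)).
Proof.
rewrite /FF /inner Re_sum; apply: eq_bigr => i _.
rewrite mxE big_distrl /= Re_sum; apply: eq_bigr => j _.
by rewrite -mulrA ReM.
Qed.

Lemma FF_entriesIm n (X : 'M[C]_n) z : IM (FF X z) =
  \sum_i \sum_j (RE (X i j) * IM (z j 0 * (z i 0)^*%C) + IM (X i j) * RE (z j 0 * (z i 0)^*%C)).
Proof.
rewrite /FF /inner Im_sum; apply: eq_bigr => i _.
rewrite mxE big_distrl /= Im_sum; apply: eq_bigr => j _.
by rewrite -mulrA ImM.
Qed.

Lemma FF_mx_integral n (Hf : R -> 'M[C]_n) z :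
  (forall i j, itg (fun s => RE (Hf s i j))) ->
  (forall i j, itg (fun s => IM (Hf s i j))) ->
  [/\ itg (fun s => RE (FF (Hf s) z)),
      RE (FF (mx_integral nu Hf) z) = Rint (fun s => RE (FF (Hf s) z)),
      itg (fun s => IM (FF (Hf s) z)) &
      IM (FF (mx_integral nu Hf) z) = Rint (fun s => IM (FF (Hf s) z))].
Proof.
move=> hR hI.
have eR : (fun s => RE (FF (Hf s) z)) = (fun s => \sum_i \sum_j (RE (Hf s i j) * RE (z j 0 * (z i 0)^*%C) - IM (Hf s i j) * IM (z j 0 * (z i 0)^*%C))).
  by apply: funext => s; rewrite FF_entriesRe.
have eI : (fun s => IM (FF (Hf s) z)) = (fun s => \sum_i \sum_j (RE (Hf s i j) * IM (z j 0 * (z i 0)^*%C) + IM (Hf s i j) * RE (z j 0 * (z i 0)^*%C))).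
  by apply: funext => s; rewrite FF_entriesIm.
have iR : forall i j, itg (fun s => RE (Hf s i j) * RE (z j 0 * (z i 0)^*%C) - IM (Hf s i j) * IM (z j 0 * (z i 0)^*%C)).
  by move=> i j; apply: itg_add; [exact: itg_scale | apply: itg_opp; exact: itg_scale].
have iI : forall i j, itg (fun s => RE (Hf s i j) * IM (z j 0 * (z i 0)^*%C) + IM (Hf s i j) * RE (z j 0 * (z i 0)^*%C)).
  by move=> i j; apply: itg_add; exact: itg_scale.
have sR : forall i, itg (fun s => \sum_j (RE (Hf s i j) * RE (z j 0 * (z i 0)^*%C) - IM (Hf s i j) * IM (z j 0 * (z i 0)^*%C))).
  by move=> i; case: (Rint_sum (index_enum _) (iR i)).
have sI : forall i, itg (fun s => \sum_j (RE (Hf s i j) * IM (z j 0 * (z i 0)^*%C) + IM (Hf s i j) * RE (z j 0 * (z i 0)^*%C))).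
  by move=> i; case: (Rint_sum (index_enum _) (iI i)).
have [tR RR] := Rint_sum (index_enum _) sR.
have [tI II] := Rint_sum (index_enum _) sI.
rewrite eR eI; split => //.
- rewrite RR FF_entriesRe; apply: eq_bigr => i _.
  have [_ ->] := Rint_sum (index_enum _) (iR i); apply: eq_bigr => j _.
  by rewrite Rint_lin // /mx_integral mxE.
- rewrite II FF_entriesIm; apply: eq_bigr => i _.
  have [_ ->] := Rint_sum (index_enum _) (iI i); apply: eq_bigr => j _.
  by rewrite Rint_lin2 // /mx_integral mxE.
Qed.
End Int.

Section Harm.
Variable R : realType.
Local Notation C := R[i].
Variable n : nat.
Local Notation V := 'cV[C]_n.
Local Notation M := 'M[C]_n.
Local Notation D := (`[0, 1]%classic : set R).

Lemma inner_delta (u : V) i : inner u (delta_mx i 0) = u i 0.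
Proof.
rewrite /inner (bigD1 i) //= big1 ?addr0.
  by rewrite mxE !eqxx /= oppr0 mulr1.
move=> k ki; have ik : (i == k) = false by apply/negbTE; rewrite eq_sym.
by rewrite mxE (negbTE ki) /= oppr0 mulr0.
Qed.

Lemma inner_entry (X : M) c i j : inner (X *m (c *: delta_mx j 0)) (delta_mx i 0) = c * X i j.
Proof. by rewrite inner_delta -scalemxAr mxE -colE mxE. Qed.

Lemma FF_unit (X : M) c w : c * c^*%C = 1 -> FF X (c *: w) = FF X w.
Proof.
move=> h; rewrite /FF -scalemxAr innerZl innerZr mulrA.
by rewrite h mul1r.
Qed.

Lemma entry_bound t (X : M) i j : 0 <= t -> Wt t X ->
  `|RE (X i j)| <= RE (FF X (delta_mx j 0)) + (1 + t ^+ 2) * RE (FF X (delta_mx i 0)) /\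
  `|IM (X i j)| <= RE (FF X (delta_mx j 0)) + (1 + t ^+ 2) * RE (FF X (delta_mx i 0)).
Proof.
move=> t0 W.
have key c : c * c^*%C = 1 -> 2 * RE (c * X i j) <=
    RE (FF X (delta_mx j 0)) + (1 + t ^+ 2) * RE (FF X (delta_mx i 0)).
  move=> cc; have := lemS t0 W (c *: delta_mx j 0) (delta_mx i 0).
  by rewrite inner_entry FF_unit.
have p1 : (1:C) * (1:C)^*%C = 1.
  by apply/eqP; rewrite eq_complex /=; apply/andP; split; apply/eqP; ring.
have p2 : (-1:C) * (-1:C)^*%C = 1.
  by apply/eqP; rewrite eq_complex /=; apply/andP; split; apply/eqP; ring.
have p3 : ('i%C:C) * ('i%C:C)^*%C = 1.
  by apply/eqP; rewrite eq_complex /=; apply/andP; split; apply/eqP; ring.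
have p4 : (-'i%C:C) * (-'i%C:C)^*%C = 1.
  by apply/eqP; rewrite eq_complex /=; apply/andP; split; apply/eqP; ring.
have h1 := key _ p1; have h2 := key _ p2; have h3 := key _ p3; have h4 := key _ p4.
move: h1 h2 h3 h4; rewrite !ReM /= => h1 h2 h3 h4.
have [a0 _] := W (delta_mx j 0); have [b0 _] := W (delta_mx i 0).
have t2 : 0 <= 1 + t ^+ 2 by rewrite addr_ge0 ?sqr_ge0.
have b1 : 0 <= (1 + t ^+ 2) * RE (FF X (delta_mx i 0)) by rewrite mulr_ge0.
split; rewrite ler_norml; apply/andP; split; lra.
Qed.


Lemma inD (s : R) : D s -> 0 <= s <= 1.
Proof. by rewrite /= in_itv. Qed.

Lemma cm_eq (h1 h2 : R -> C) : (forall s, D s -> h1 s = h2 s) -> cm D h1 -> cm D h2.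
Proof.
move=> e [m1 m2]; split.
  by apply: (eq_measurable_fun _ _ m1) => s; rewrite inE => Ds; rewrite e.
by apply: (eq_measurable_fun _ _ m2) => s; rewrite inE => Ds; rewrite e.
Qed.

Lemma cm_1m : cm D (fun s : R => (1 - s)%:C%C).
Proof.
split => /=; last exact: measurable_cst.
by apply: measurable_realfun.measurable_funB; [exact: measurable_cst | exact: measurable_id].
Qed.

Lemma cm_Mx (A B : M) i j : cm D (fun s => Mx s A B i j).
Proof.
apply: (@cm_eq (fun s => (1 - s)%:C%C * invmx A i j + s%:C%C * invmx B i j)).
  by move=> s _; rewrite /Mx !mxE.
apply: cm_add; apply: cm_mul; (exact: cm_1m || exact: cm_real || exact: cm_cst).
Qed.

Lemma harm_unit (A B : M) (s : R) : Pos A -> Pos B -> D s ->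
  Mx s A B \in unitmx.
Proof.
move=> PA PB Ds; apply: Pos_unit; apply: Pos_comb; first exact: inD.
  exact: Pos_inv. exact: Pos_inv.
Qed.

Lemma harm_Wt t (A B : M) (s : R) : Pos A -> Pos B -> Wt t A -> Wt t B -> D s ->
  Wt t (harm_s s A B).
Proof.
move=> PA PB WA WB Ds.
apply: Wt_inv; first exact: harm_unit.
apply: Wt_comb; first exact: inD.
  by apply: Wt_inv => //; exact: Pos_unit.
by apply: Wt_inv => //; exact: Pos_unit.
Qed.

Lemma cm_harm (A B : M) i j : Pos A -> Pos B -> cm D (fun s => harm_s s A B i j).
Proof.
move=> PA PB.
apply: (@cm_eq (fun s => (\det (Mx s A B))^-1 * ((-1) ^+ (j + i) * \det (row' j (col' i (Mx s A B)))))).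
  move=> s Ds; rewrite /harm_s -/(Mx s A B) /invmx (harm_unit PA PB Ds) mxE.
  by rewrite /adjugate mxE /cofactor.
apply: cm_mul.
  apply: cm_inv; first by apply: cm_det => k l; exact: cm_Mx.
  move=> s Ds; have := harm_unit PA PB Ds; by rewrite unitmxE unitfE.
apply: cm_mul; first exact: cm_cst.
apply: cm_det => k l.
by apply: (@cm_eq (fun s => Mx s A B (lift j k) (lift i l))) => [s _|]; rewrite ?mxE //; exact: cm_Mx.
Qed.


Lemma harm_bound t (A B : M) i j : 0 <= t -> Pos A -> Pos B -> Wt t A -> Wt t B ->
  exists Bd, forall s, D s ->
    `|RE (harm_s s A B i j)| <= Bd /\ `|IM (harm_s s A B i j)| <= Bd.
Proof.
move=> t0 PA PB WA WB.
set T := 1 + t ^+ 2.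
have T0 : 0 <= T by rewrite addr_ge0 ?sqr_ge0.
set G := fun k : 'I_n => `|RE (FF A (delta_mx k 0))| + `|RE (FF B (delta_mx k 0))|.
exists (T * G j + T * (T * G i)) => s Ds.
have UA := Pos_unit PA; have UB := Pos_unit PB.
have W := harm_Wt PA PB WA WB Ds.
have [h1 h2] := entry_bound i j t0 W.
have Fk : forall k, RE (FF (harm_s s A B) (delta_mx k 0)) <= T * G k.
  move=> k.
  have := lemP1 (delta_mx k 0) (delta_mx k 0) t0 (inD Ds) UA UB WA WB (harm_unit PA PB Ds).
  have -> : (1 - s)%:C%C *: (delta_mx k 0 : 'cV[C]_n) + s%:C%C *: delta_mx k 0 = delta_mx k 0.
    rewrite -scalerDl (_ : _ + _ = 1) ?scale1r //.
    by apply/eqP; rewrite eq_complex /= subrK addr0 !eqxx.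
  move=> /le_trans; apply; apply: ler_wpM2l => //.
  have /andP[s0 s1] := inD Ds.
  have s1' : 0 <= 1 - s by rewrite subr_ge0.
  rewrite /G; apply: lerD.
    apply: (le_trans (ler_wpM2l s1' (ler_norm _))).
    by apply: ler_piMl => //; rewrite lerBlDr lerDl.
  apply: (le_trans (ler_wpM2l s0 (ler_norm _))).
  exact: ler_piMl.
have e : RE (FF (harm_s s A B) (delta_mx j 0)) + (1 + t ^+ 2) * RE (FF (harm_s s A B) (delta_mx i 0))
   <= T * G j + T * (T * G i).
  by apply: lerD; [exact: Fk | apply: ler_wpM2l => //; exact: Fk].
by split; apply: le_trans e.
Qed.

End Harm.



Section Sig.
Variable R : realType.
Local Notation C := R[i].
Variable nu : probability R R.
Variable n : nat.
Local Notation V := 'cV[C]_n.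
Local Notation M := 'M[C]_n.
Local Notation D := (`[0, 1]%classic : set R).
Local Notation Rint f := (Rintegral nu D f).
Local Notation itg f := (nu.-integrable D (EFin \o f)).

Lemma sigma_FF t (A B : M) (z : V) : 0 <= t -> Pos A -> Pos B -> Wt t A -> Wt t B ->
  [/\ itg (fun s => RE (FF (harm_s s A B) z)),
      RE (FF (sigma_mean nu A B) z) = Rint (fun s => RE (FF (harm_s s A B) z)),
      itg (fun s => IM (FF (harm_s s A B) z)) &
      IM (FF (sigma_mean nu A B) z) = Rint (fun s => IM (FF (harm_s s A B) z))].
Proof.
move=> t0 PA PB WA WB.
apply: FF_mx_integral => i j.
  have [Bd HB] := harm_bound i j t0 PA PB WA WB.
  apply: (@int_bdd _ nu _ Bd); first by case: (cm_harm i j PA PB).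
  by move=> s Ds; case: (HB s Ds).
have [Bd HB] := harm_bound i j t0 PA PB WA WB.
apply: (@int_bdd _ nu _ Bd); first by case: (cm_harm i j PA PB).
by move=> s Ds; case: (HB s Ds).
Qed.

Lemma RintZr f (c : R) : itg f -> Rint (fun s => f s * c) = Rint f * c.
Proof. by move=> hf; rewrite RintegralZr //; exact: mD. Qed.

Lemma sigma_Wt t (A B : M) : 0 <= t -> Pos A -> Pos B -> Wt t A -> Wt t B ->
  Wt t (sigma_mean nu A B).
Proof.
move=> t0 PA PB WA WB z.
have [iR eR iI eI] := sigma_FF z t0 PA PB WA WB.
have W s : D s -> Wt t (harm_s s A B) by exact: harm_Wt.
split.
  by rewrite eR; apply: Rintegral_ge0 => s Ds; case: (W s Ds z).
set f := (fun s => RE (FF (harm_s s A B) z)) in iR eR *.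
set g := (fun s => IM (FF (harm_s s A B) z)) in iI eI *.
have E1 : t * Rint f = Rint (fun s => f s * t) by rewrite RintZr // mulrC.
have E2 : Rint (fun s => g s * (-1)) = - Rint g by rewrite RintZr // mulrN1.
rewrite eR eI E1 ler_norml; apply/andP; split.
  rewrite lerNl -E2.
  apply: le_Rintegral; [exact: mD | exact: itg_scale | exact: itg_scale | ].
  move=> s Ds; have [_] := W s Ds z; rewrite ler_norml => /andP[h _].
  by rewrite /f /g /= mulrN1 mulrC lerNl.
have mD0 : measurable D by exact: mD.
have i2 : itg (fun s => f s * t) by exact: itg_scale.
have L := le_Rintegral mD0 iI i2.
refine (L _) => s Ds.
have [_] := W s Ds z; rewrite ler_norml => /andP[_ h].
by rewrite mulrC.
Qed.

Lemma sigma_le t (A B Cm Dm : M) (z : V) : 0 <= t ->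
  Pos A -> Pos B -> Pos Cm -> Pos Dm -> Wt t A -> Wt t B -> Wt t Cm -> Wt t Dm ->
  loewner_le (realpart A) (realpart Cm) -> loewner_le (realpart B) (realpart Dm) ->
  RE (FF (sigma_mean nu A B) z) <= (1 + t ^+ 2) * RE (FF (sigma_mean nu Cm Dm) z).
Proof.
move=> t0 PA PB PC PD WA WB WC WD L1 L2.
have [iR eR _ _] := sigma_FF z t0 PA PB WA WB.
have [iR' eR' _ _] := sigma_FF z t0 PC PD WC WD.
set f := (fun s => RE (FF (harm_s s A B) z)) in iR eR *.
set f' := (fun s => RE (FF (harm_s s Cm Dm) z)) in iR' eR' *.
have E : Rint (fun s => f' s * (1 + t ^+ 2)) = Rint f' * (1 + t ^+ 2) := RintZr _ iR'.
move: eR eR'; generalize (sigma_mean nu A B) (sigma_mean nu Cm Dm) => X Y eR eR'.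
rewrite eR eR' mulrC -E.
have mD0 : measurable D by exact: mD.
have i2 : itg (fun s => f' s * (1 + t ^+ 2)) := itg_scale _ iR'.
have L := le_Rintegral mD0 iR i2.
refine (L _) => s Ds.
rewrite mulrC.
exact: (lemP2 z t0 (inD Ds) (Pos_unit PA) (Pos_unit PB) (Pos_unit PC) (Pos_unit PD) WA WB
  (harm_unit PA PB Ds) (harm_unit PC PD Ds) L1 L2).
Qed.
End Sig.



Section Md.
Variable R : realType.
Local Notation C := R[i].
Implicit Types (x y z : C).

Definition md z := RE `|z|.

Lemma mdE z : md z = Num.sqrt (RE z ^+ 2 + IM z ^+ 2).
Proof. by rewrite /md normc_def. Qed.
Lemma normE z : `|z| = (md z)%:C%C.
Proof. by rewrite mdE normc_def. Qed.
Lemma md_ge0 z : 0 <= md z.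
Proof. by rewrite mdE sqrtr_ge0. Qed.
Lemma md_sq z : md z ^+ 2 = RE z ^+ 2 + IM z ^+ 2.
Proof. by rewrite mdE sqr_sqrtr // addr_ge0 ?sqr_ge0. Qed.
Lemma mdM x y : md (x * y) = md x * md y.
Proof.
have := normrM x y; rewrite !normE => /(congr1 (@complex.Re R)) /=.
by rewrite !mul0r subr0.
Qed.
Lemma md_add x y : md (x + y) <= md x + md y.
Proof. by have := ler_normD x y; rewrite !normE lecE => /andP[_ h]. Qed.
Lemma md_sum (I : Type) (r : seq I) (F : I -> C) :
  md (\sum_(i <- r) F i) <= \sum_(i <- r) md (F i).
Proof.
elim: r => [|a r IH]; first by rewrite !big_nil mdE /= expr0n addr0 sqrtr0.
by rewrite !big_cons; apply: (le_trans (md_add _ _)); apply: lerD.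
Qed.
Lemma Re_le_md z : RE z <= md z.
Proof.
rewrite mdE; apply: (le_trans (ler_norm _)); rewrite -sqrtr_sqr.
by apply: ler_wsqrtr; rewrite lerDl sqr_ge0.
Qed.
Lemma md_conj z : md (z^*)%C = md z.
Proof. by rewrite !mdE ReJ ImJ sqrrN. Qed.
Lemma md_opp z : md (- z) = md z.
Proof. by rewrite !mdE ReN ImN !sqrrN. Qed.
Lemma md_real (r : R) : md (r%:C)%C = `|r|.
Proof. by rewrite mdE /= expr0n /= addr0 sqrtr_sqr. Qed.
Lemma mul_conj z : z * (z^*)%C = (md z ^+ 2)%:C%C.
Proof.
rewrite md_sq; case: z => a b; apply/eqP; rewrite eq_complex /=.
by apply/andP; split; apply/eqP; rewrite ?expr2; ring.
Qed.
End Md.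

Section W.
Variable R : realType.
Local Notation C := R[i].
Variable n : nat.
Local Notation V := 'cV[C]_n.
Local Notation M := 'M[C]_n.

Lemma inner_entries (X : M) (x y : V) :
  inner (X *m x) y = \sum_i \sum_j X i j * (x j 0 * (y i 0)^*%C).
Proof.
rewrite /inner; apply: eq_bigr => i _.
rewrite mxE big_distrl /=; apply: eq_bigr => j _.
by rewrite mulrA.
Qed.

Lemma md_coord (x : V) j : inner x x = 1 -> md (x j 0) <= 1.
Proof.
move=> h.
have e : \sum_i (RE (x i 0) ^+ 2 + IM (x i 0) ^+ 2) = 1.
  by have := congr1 (@complex.Re R) h; rewrite inner_selfE.
have : md (x j 0) ^+ 2 <= 1.
  rewrite md_sq -e (bigD1 j) //= lerDl; apply: sumr_ge0 => i _.
  by rewrite addr_ge0 ?sqr_ge0.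
have := md_ge0 (x j 0); move: (md (x j 0)) => m m0 hm; nra.
Qed.

Lemma bound_inner (X : M) (x y : V) : inner x x = 1 -> inner y y = 1 ->
  md (inner (X *m x) y) <= \sum_i \sum_j md (X i j).
Proof.
move=> hx hy; rewrite inner_entries.
apply: (le_trans (md_sum _ _)); apply: ler_sum => i _.
apply: (le_trans (md_sum _ _)); apply: ler_sum => j _.
rewrite !mdM md_conj -[X in _ <= X]mulr1; apply: ler_wpM2l; first exact: md_ge0.
rewrite -[1]mulr1; apply: ler_pM; rewrite ?md_ge0 //; exact: md_coord.
Qed.

Definition SW (q : C) (X : M) : set R := fun r => exists x y : V,
  [/\ inner x x = 1, inner y y = 1, inner x y = q & r = RE `|inner (X *m x) y|].

Lemma wqE q X : wq q X = sup (SW q X).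
Proof. by []. Qed.

Lemma SW_ub q X : has_ubound (SW q X).
Proof.
exists (\sum_i \sum_j md (X i j)) => r [x [y [hx hy _ ->]]].
exact: bound_inner.
Qed.

Lemma SW_le q X (x y : V) : inner x x = 1 -> inner y y = 1 -> inner x y = q ->
  md (inner (X *m x) y) <= wq q X.
Proof.
move=> hx hy hq; rewrite wqE; apply: ub_le_sup; first exact: SW_ub.
by exists x, y.
Qed.

Lemma orth (z : V) : (2 <= n)%N -> inner z z = 1 ->
  exists u : V, inner u u = 1 /\ inner z u = 0.
Proof.
move=> n2 hz.
have e : \sum_i (RE (z i 0) ^+ 2 + IM (z i 0) ^+ 2) = 1.
  by have := congr1 (@complex.Re R) hz; rewrite inner_selfE.
pose m k := RE (z k 0) ^+ 2 + IM (z k 0) ^+ 2.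
have m0 k : 0 <= m k by rewrite /m addr_ge0 ?sqr_ge0.
have [k hk] : exists k, m k < 1.
  have n0 : (0 < n)%N by apply: leq_trans n2.
  have n1 : (1 < n)%N by [].
  pose i0 := Ordinal n0; pose i1 := Ordinal n1.
  case: (ltP (m i0) 1) => [h|h]; first by exists i0.
  exists i1.
  have ne : i1 != i0 by apply/eqP => /(congr1 val).
  have : m i0 + m i1 <= 1.
    rewrite -e (bigD1 i0) //= (bigD1 i1) //= /m.
    have : 0 <= \sum_(i < n | (i != i0) && (i != i1)) (RE (z i 0) ^+ 2 + IM (z i 0) ^+ 2) by apply: sumr_ge0 => i _; rewrite addr_ge0 ?sqr_ge0.
    lra.
  move=> h2; lra.
set w := z k 0.
have mw : w * (w^*)%C = (m k)%:C%C by rewrite mul_conj md_sq.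
set ek : V := delta_mx k 0.
have ez : inner ek z = (w^*)%C by rewrite inner_conj inner_delta.
have ze : inner z ek = w by rewrite inner_delta.
have ee : inner ek ek = 1 by rewrite inner_delta mxE !eqxx.
set v : V := ek - (w^*)%C *: z.
have vz : inner z v = 0 by rewrite innerBr innerZr ze hz cjK mulr1 subrr.
have vv : inner v v = (1 - m k)%:C%C.
  rewrite /v innerBl !innerBr !innerZl !innerZr ee ez ze hz cjK mulr1.
  have -> : (1 - m k)%:C%C = 1 - (m k)%:C%C.
    by apply/eqP; rewrite eq_complex /= subr0 !eqxx.
  by rewrite -mw; ring.
have pk : 0 < 1 - m k by rewrite subr_gt0.
set r := (Num.sqrt (1 - m k))^-1.
exists (r%:C%C *: v); split.
  rewrite inner_scaleR vv -rmorphM /= /r exprVn sqr_sqrtr ?ltW // mulVf ?gt_eqF //.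
rewrite innerZr vz mulr0 //.
Qed.

Lemma two_real : (2 : C) = (2 : R)%:C%C.
Proof. by apply/eqP; rewrite eq_complex /= addr0 !eqxx. Qed.

Lemma W3 (Y : M) (q : C) (z : V) : (2 <= n)%N -> md q <= 1 -> inner z z = 1 ->
  md q * md (FF Y z) <= wq q Y.
Proof.
move=> n2 q1 hz.
have [u [hu zu]] := orth n2 hz.
have uz : inner u z = 0 by rewrite inner_conj zu /= oppr0.
have qq : (q^*)%C * q = (md q ^+ 2)%:C%C by rewrite mulrC mul_conj.
have pair (s : R) : s ^+ 2 = 1 - md q ^+ 2 ->
    inner ((q^*)%C *: z + s%:C%C *: u) ((q^*)%C *: z + s%:C%C *: u) = 1 /\
    inner z ((q^*)%C *: z + s%:C%C *: u) = q.
  move=> hs; split.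
    rewrite !innerDl !innerDr !innerZl !innerZr hz hu zu uz cjK !mulr1 !mulr0 !addr0 add0r qq.
    have -> : s%:C%C * (s%:C%C)^*%C = (s ^+ 2)%:C%C.
      by apply/eqP; rewrite eq_complex /=; apply/andP; split; apply/eqP; rewrite ?expr2; ring.
    rewrite hs; apply/eqP; rewrite eq_complex /=.
    by apply/andP; split; apply/eqP; ring.
  by rewrite innerDr !innerZr hz zu cjK mulr1 mulr0 addr0.
set s0 := Num.sqrt (1 - md q ^+ 2).
have q2 : 0 <= 1 - md q ^+ 2.
  have := md_ge0 q; move: (md q) q1 => mq q1 mq0; nra.
have hs0 : s0 ^+ 2 = 1 - md q ^+ 2 by rewrite sqr_sqrtr.
have hs1 : (- s0) ^+ 2 = 1 - md q ^+ 2 by rewrite sqrrN.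
have [p1 p2] := pair _ hs0; have [p3 p4] := pair _ hs1.
have l1 := SW_le Y hz p1 p2; have l2 := SW_le Y hz p3 p4.
move: l1 l2.
rewrite !innerDr !innerZr cjK => l1 l2.
have := le_trans (md_add _ _) (lerD l1 l2).
have -> : q * inner (Y *m z) z + (s0%:C%C)^*%C * inner (Y *m z) u +
          (q * inner (Y *m z) z + ((- s0)%:C%C)^*%C * inner (Y *m z) u) =
          2 * (q * FF Y z).
  rewrite /FF (_ : ((- s0)%:C%C)^*%C = - (s0%:C%C)^*%C); last first.
    by apply/eqP; rewrite eq_complex /= !oppr0 !eqxx.
  ring.
rewrite two_real !mdM md_real ger0_norm // => h.
have : 2 * (md q * md (FF Y z)) <= 2 * wq q Y by rewrite mulrA mulr2n mulrDl mul1r -mulr2n -mulr2n; lra.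
by rewrite ler_pM2l.
Qed.

End W.

Section Final.
Variable R : realType.
Local Notation C := R[i].
Variable n : nat.
Local Notation V := 'cV[C]_n.
Local Notation M := 'M[C]_n.

Lemma md_eq0 (z : C) : md z = 0 -> z = 0.
Proof.
move=> h; have := md_sq z; rewrite h expr0n /= => /esym /eqP.
rewrite paddr_eq0 ?sqr_ge0 // !sqrf_eq0.
by clear h; case: z => a b /= /andP[/eqP -> /eqP ->].
Qed.

Lemma pair_exists (q : C) (z : V) : (2 <= n)%N -> md q <= 1 -> inner z z = 1 ->
  exists y : V, inner y y = 1 /\ inner z y = q.
Proof.
move=> n2 q1 hz.
have [u [hu zu]] := orth n2 hz.
have uz : inner u z = 0 by rewrite inner_conj zu /= oppr0.
have qq : (q^*)%C * q = (md q ^+ 2)%:C%C by rewrite mulrC mul_conj.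
set s := Num.sqrt (1 - md q ^+ 2).
have q2 : 0 <= 1 - md q ^+ 2.
  have := md_ge0 q; move: (md q) q1 => mq q1 mq0; nra.
have hs : s ^+ 2 = 1 - md q ^+ 2 by rewrite sqr_sqrtr.
exists ((q^*)%C *: z + s%:C%C *: u); split.
  rewrite !innerDl !innerDr !innerZl !innerZr hz hu zu uz cjK !mulr1 !mulr0 !addr0 add0r qq.
  have -> : s%:C%C * (s%:C%C)^*%C = (s ^+ 2)%:C%C.
    by apply/eqP; rewrite eq_complex /=; apply/andP; split; apply/eqP; rewrite ?expr2; ring.
  rewrite hs; apply/eqP; rewrite eq_complex /=.
  by apply/andP; split; apply/eqP; ring.
by rewrite innerDr !innerZr hz zu cjK mulr1 mulr0 addr0.
Qed.

Lemma unit_vec : (0 < n)%N -> exists z : V, inner z z = 1.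
Proof.
move=> n0; exists (delta_mx (Ordinal n0) 0).
by rewrite inner_delta mxE !eqxx.
Qed.

Lemma final_abs (X Y : M) (q : C) (t c : R) : (2 <= n)%N -> 0 <= t -> 0 < c ->
  1 + t ^+ 2 = c^-1 ^+ 2 -> 0 < md q -> md q <= 1 -> Wt t X ->
  (forall z, RE (FF X z) <= (1 + t ^+ 2) * RE (FF Y z)) ->
  md q * wq q X <= (c ^+ 3)^-1 * wq q Y.
Proof.
move=> n2 t0 c0 tc q0 q1 WX XY.
set W := wq q Y.
set sg := c^-1.
have sg0 : 0 < sg by rewrite invr_gt0.
have hY (z : V) : inner z z = 1 -> md q * RE (FF Y z) <= W.
  move=> hz; apply: le_trans (W3 Y n2 q1 hz).
  by apply: ler_wpM2l; [exact: md_ge0 | exact: Re_le_md].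
have key (x y : V) : inner x x = 1 -> inner y y = 1 -> inner x y = q ->
    md q * md (inner (X *m x) y) <= sg ^+ 3 * W.
  move=> hx hy hq.
  set P := inner (X *m x) y.
  have [om [omP omom]] : exists om : C, om * P = (md P)%:C%C /\ om * (om^*)%C = 1.
    have [P0|P0] := eqVneq P 0.
      exists 1; rewrite P0 mulr0 mul1r; split.
        by apply/eqP; rewrite eq_complex /= mdE /= expr0n /= addr0 sqrtr0 !eqxx.
      by apply/eqP; rewrite eq_complex /=; apply/andP; split; apply/eqP; ring.
    have m0 : md P != 0 by apply/eqP => /md_eq0; apply/eqP.
    have mC0 : (md P)%:C%C != 0 by apply: contra m0 => /eqP [->].
    exists ((P^*)%C / (md P)%:C%C); split.
      rewrite mulrAC [X in X / _]mulrC mul_conj.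
      have -> : (md P ^+ 2)%:C%C = (md P)%:C%C * (md P)%:C%C.
        by apply/eqP; rewrite eq_complex /=; apply/andP; split; apply/eqP; rewrite ?expr2; ring.
      by rewrite mulfK.
    rewrite mul_conj; have -> : md (P^*%C / (md P)%:C%C) = 1.
      have h1 := mdM (P^*%C / (md P)%:C%C) (md P)%:C%C.
      rewrite mulfVK // md_conj md_real ger0_norm ?md_ge0 // in h1.
      by apply: (mulIf m0); rewrite mul1r.
    by rewrite expr1n.
  have h1 := lemS t0 WX (sg%:C%C *: (om *: x)) y.
  rewrite FF_scaleR FF_unit // ReRM -scalemxAr innerZl -scalemxAr innerZl omP in h1.
  rewrite -rmorphM /= in h1.
  have hx' := XY x; have hy' := XY y.
  have ax := hY x hx; have ay := hY y hy.
  rewrite tc in h1 hx' hy'.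
  have T0 : 0 <= sg ^+ 2 by rewrite sqr_ge0.
  have mq0 : 0 <= md q by exact: md_ge0.
  have s1 := ler_wpM2l mq0 h1.
  have s2 := ler_wpM2l T0 hx'.
  have s3 := ler_wpM2l T0 hy'.
  have T4 : 0 <= sg ^+ 2 * sg ^+ 2 by rewrite mulr_ge0.
  have s4 := ler_wpM2l T4 ax.
  have s5 := ler_wpM2l T4 ay.
  have s6 := ler_wpM2l mq0 s2.
  have s7 := ler_wpM2l mq0 s3.
  have fin : sg * (md q * md P) <= sg * (sg ^+ 3 * W).
    rewrite !exprS expr0 !mulr1 in s1 s2 s3 s4 s5 s6 s7 T4 *.
    lra.
  by rewrite ler_pM2l in fin.
have [z hz] := unit_vec (leq_trans (isT : (0 < 2)%N) n2).
have [y [hy hzy]] := pair_exists n2 q1 hz.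
rewrite -exprVn -/sg.
have ne : (SW q X !=set0)%classic.
  by exists (md (inner (X *m z) y)), z, y.
rewrite wqE mulrC -ler_pdivlMr //.
apply: ge_sup => // r [x [y' [hx hy' hq ->]]].
by rewrite ler_pdivlMr // mulrC; exact: key.
Qed.
End Final.




Unset Implicit Arguments.

Theorem mainTheorem9 (R : realType) (n : nat) (alpha : R)
  (A B C D : 'M[R[i]]_n) (q : R[i]) (f : R -> R) (nu : probability R R) :
  (2 <= n)%N ->
  0 <= alpha -> alpha < pi / 2 ->
  in_Pi alpha A -> in_Pi alpha B -> in_Pi alpha C -> in_Pi alpha D ->
  0 < `|q| -> `|q| <= 1 ->
  in_classF f -> represents nu f ->
  loewner_le (realpart A) (realpart C) ->
  loewner_le (realpart B) (realpart D) ->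
  complex.Re `|q| * wq q (sigma_mean nu A B)
    <= (cos alpha ^+ 3)^-1 * wq q (sigma_mean nu C D).
Proof.
move=> n2 a0 a1 PiA PiB PiC PiD q0 q1 _ _ LAC LBD.
have [PA WA] := Pi_PosWt PiA.
have [PB WB] := Pi_PosWt PiB.
have [PC WC] := Pi_PosWt PiC.
have [PD WD] := Pi_PosWt PiD.
have pi0 := pi_gt0 R.
have c0 : 0 < cos alpha.
  apply: cos_gt0_pihalf; apply/andP; split => //.
  apply: lt_le_trans a0; rewrite oppr_lt0 divr_gt0 //.
have s0 : 0 <= sin alpha.
  apply: sin_ge0_pi; apply/andP; split => //.
  apply: (le_trans (ltW a1)); rewrite ler_pdivrMr // ler_peMr // ?ltW //.
  lra.
have t0 : 0 <= tan alpha by rewrite /tan divr_ge0 // ltW.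
have tc : 1 + tan alpha ^+ 2 = (cos alpha)^-1 ^+ 2.
  have e := cos2Dsin2 alpha.
  have cne : cos alpha != 0 by rewrite gt_eqF.
  by rewrite /tan expr_div_n exprVn -[1 in LHS](@divff _ (cos alpha ^+ 2)) ?expf_neq0 // -mulrDl e mul1r.
have q0' : 0 < md q by move: q0; rewrite ltcE => /andP[_].
have q1' : md q <= 1 by move: q1; rewrite lecE => /andP[_].
have WX := sigma_Wt nu t0 PA PB WA WB.
have le z := sigma_le nu z t0 PA PB PC PD WA WB WC WD LAC LBD.
move: WX le; generalize (sigma_mean nu A B) (sigma_mean nu C D) => X Y WX le.
exact: (final_abs n2 t0 c0 tc q0' q1' WX le).
Qed.
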